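(* Let $H=E_0|E_0\rangle\langle E_0|+E_1|E_1\rangle\langle E_1|$ be a non-degenerate Hamiltonian on a qubit ($E_0\ne E_1$, $\{|E_0\rangle,|E_1\rangle\}$ orthonormal), and let $|\psi_0\rangle=c_0|E_0\rangle+c_1|E_1\rangle$ with $|c_0|^2+|c_1|^2=1$. Let $\{|k_n\rangle\}_n$ be the Krylov basis generated from $|k_0\rangle=|\psi_0\rangle$ and $H$ by the Lanczos algorithm, and let $K(t)=\sum_n n|\langle k_n|e^{-iHt}|\psi_0\rangle|^2$ be the spread complexity. Then for all $t$, $$K(t)=C_{\ell_1}^2\sin^2\!\left(\frac{\omega t}{2}\right),$$ where $\omega=E_1-E_0$ and $C_{\ell_1}=2|c_0||c_1|$ is the $\ell_1$-norm of coherence of $|\psi_0\rangle$ in the basis $\{|E_0\rangle,|E_1\rangle\}$. *)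

(* Defs.v *)
From HB Require Import structures.
From mathcomp Require Import all_boot all_order all_algebra.
From mathcomp Require Import all_classical all_reals.
From mathcomp Require Import trigo.
From mathcomp.real_closed Require Import complex.

Set Implicit Arguments.
Unset Strict Implicit.
Unset Printing Implicit Defensive.

Import Order.TTheory GRing.Theory Num.Theory.
Local Open Scope ring_scope.
Local Open Scope complex_scope.

Section Qubit.
Variable R : realType.
Local Notation C := R[i].

Definition ket := 'cV[C]_2.

Definition bra (v : ket) : 'rV[C]_2 := (map_mx Num.conj v)^T.

Definition braket (u v : ket) : C := (bra u *m v) 0 0.

Definition knorm (v : ket) : C := sqrtC (braket v v).

Definition ketbra (u v : ket) : 'M[C]_2 := u *m bra v.

Definition hamiltonian (E0 E1 : R) (e0 e1 : ket) : 'M[C]_2 :=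
  E0%:C *: ketbra e0 e0 + E1%:C *: ketbra e1 e1.

Definition expmi (x : R) : C := cos x +i* (- sin x).

(* Time-evolution operator e^{-iHt}, defined by the spectral calculus of
   H = E0 |E0><E0| + E1 |E1><E1| (orthonormal eigenbasis):
   e^{-iHt} = e^{-i E0 t} |E0><E0| + e^{-i E1 t} |E1><E1|. *)
Definition evolution (E0 E1 : R) (e0 e1 : ket) (t : R) : 'M[C]_2 :=
  expmi (E0 * t) *: ketbra e0 e0 + expmi (E1 * t) *: ketbra e1 e1.

(* Starting from k_{-1} = 0, b_0 = 0, k_0 = psi0:
     a_n     = <k_n|H|k_n>
     A_{n+1} = (H - a_n) k_n - b_n k_{n-1}
     b_{n+1} = ||A_{n+1}||
     stop if b_{n+1} = 0, otherwise k_{n+1} = A_{n+1} / b_{n+1}.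
   [lanczos_aux H fuel kp kc b] returns the list k_n, k_{n+1}, ... produced
   from k_{n-1} = kp, k_n = kc, b_n = b, performing at most [fuel] further
   steps. *)
Fixpoint lanczos_aux (H : 'M[C]_2) (fuel : nat) (kp kc : ket) (b : C)
  : seq ket :=
  kc :: match fuel with
        | 0 => [::]
        | f.+1 =>
            let a := braket kc (H *m kc) in
            let A := H *m kc - a *: kc - b *: kp in
            let b' := knorm A in
            if b' == 0 then [::] else lanczos_aux H f kc (b'^-1 *: A) b'
        end.

(* In exact arithmetic the algorithm halts
   after at most dim = 2 vectors; we allow 2 iterations (i.e. up to 3
   candidate vectors), so the cap never cuts the algorithm short. *)
Definition krylov_basis (H : 'M[C]_2) (psi0 : ket) : seq ket :=
  lanczos_aux H 2 0 psi0 0.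

Definition spread_complexity (H U : 'M[C]_2) (psi0 : ket) : C :=
  let kb := krylov_basis H psi0 in
  \sum_(n < size kb) n%:R * `|braket (nth 0 kb n) (U *m psi0)| ^+ 2.

End Qubit.

(* Main.v *)
Require Import Defs.
From HB Require Import structures.
From mathcomp Require Import all_boot all_order all_algebra.
From mathcomp Require Import all_classical all_reals.
From mathcomp Require Import trigo.
From mathcomp.real_closed Require Import complex.
From mathcomp Require Import ring lra.
Import Order.TTheory GRing.Theory Num.Theory.
Set Implicit Arguments.
Unset Strict Implicit.
Local Open Scope ring_scope.
Local Open Scope complex_scope.

Section Help.
Variable R : realType.
Local Notation C := R[i].

Lemma conjR (x : R) : Num.conj (x%:C) = x%:C.
Proof. exact: conjc_real. Qed.

Lemma cM (x y : C) : Num.conj (x * y) = Num.conj x * Num.conj y.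
Proof. exact: rmorphM. Qed.
Lemma cD (x y : C) : Num.conj (x + y) = Num.conj x + Num.conj y.
Proof. exact: rmorphD. Qed.
Lemma cN (x : C) : Num.conj (- x) = - Num.conj x.
Proof. exact: rmorphN. Qed.
Lemma cK (x : C) : Num.conj (Num.conj x) = x.
Proof. exact: conjCK. Qed.

Lemma braketZr (u v : ket R) a : braket u (a *: v) = a * braket u v.
Proof. by rewrite /braket -scalemxAr mxE. Qed.

Lemma braketDr (u v w : ket R) : braket u (v + w) = braket u v + braket u w.
Proof. by rewrite /braket mulmxDr mxE. Qed.

Lemma braketC (u v : ket R) : braket v u = Num.conj (braket u v).
Proof.
rewrite /braket !mxE rmorph_sum; apply: eq_bigr => j _.
by rewrite !mxE rmorphM /= conjCK mulrC. Qed.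

Lemma braketZl (u v : ket R) a : braket (a *: u) v = Num.conj a * braket u v.
Proof. by rewrite braketC braketZr rmorphM /= -braketC. Qed.

Lemma braketDl (u v w : ket R) : braket (u + v) w = braket u w + braket v w.
Proof. by rewrite braketC braketDr rmorphD /= -!braketC. Qed.

Lemma braket00 : braket (0 : ket R) 0 = 0.
Proof. by rewrite /braket mulmx0 mxE. Qed.

Lemma knorm0 : knorm (0 : ket R) = 0.
Proof. by rewrite /knorm braket00 sqrtC0. Qed.

Lemma ketbra_mul (u v w : ket R) : ketbra u v *m w = braket v w *: u.
Proof. by rewrite /ketbra -mulmxA [bra v *m w]mx11_scalar mul_mx_scalar. Qed.

Lemma lanczos_S H f kp kc b : @lanczos_aux R H f.+1 kp kc b =
  kc :: (let a := braket kc (H *m kc) in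
            let A := H *m kc - a *: kc - b *: kp in
            let b' := knorm A in
            if b' == 0 then [::] else lanczos_aux H f kc (b'^-1 *: A) b').
Proof. by []. Qed.

Lemma lanczos_step H f kp kc b A :
  H *m kc - braket kc (H *m kc) *: kc - b *: kp = A ->
  @lanczos_aux R H f.+1 kp kc b =
  kc :: (if knorm A == 0 then [::] else lanczos_aux H f kc ((knorm A)^-1 *: A) (knorm A)).
Proof. by move=> <-. Qed.

Lemma lanczos_0 H kp kc b : @lanczos_aux R H 0 kp kc b = [:: kc].
Proof. by []. Qed.

Variables e0 e1 : ket R.
Hypothesis h00 : braket e0 e0 = 1.
Hypothesis h11 : braket e1 e1 = 1.
Hypothesis h01 : braket e0 e1 = 0.

Lemma h10 : braket e1 e0 = 0.
Proof. by rewrite braketC h01 rmorph0. Qed.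

Definition comb (x y : C) : ket R := x *: e0 + y *: e1.

Lemma braket_comb x0 x1 y0 y1 :
  braket (comb x0 x1) (comb y0 y1) = Num.conj x0 * y0 + Num.conj x1 * y1.
Proof.
rewrite /comb !braketDl !braketDr !braketZl !braketZr h00 h11 h01 h10.
ring.
Qed.

Lemma mul_comb (a b : C) y0 y1 :
  (a *: ketbra e0 e0 + b *: ketbra e1 e1) *m comb y0 y1 = comb (a * y0) (b * y1).
Proof.
rewrite mulmxDl -!scalemxAl !ketbra_mul.
have -> : braket e0 (comb y0 y1) = y0.
  by rewrite /comb braketDr !braketZr h00 h01; ring.
have -> : braket e1 (comb y0 y1) = y1.
  by rewrite /comb braketDr !braketZr h11 h10; ring.
by rewrite /comb !scalerA.
Qed.

Lemma combZ a x y : a *: comb x y = comb (a * x) (a * y).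
Proof. by rewrite /comb scalerDr !scalerA. Qed.

Lemma combB x y x' y' : comb x y - comb x' y' = comb (x - x') (y - y').
Proof. by rewrite /comb !scalerBl; rewrite opprD !addrA; congr (_ + _); rewrite addrAC. Qed.

Lemma combD x y x' y' : comb x y + comb x' y' = comb (x + x') (y + y').
Proof. by rewrite /comb !scalerDl !addrA; congr (_ + _); rewrite addrAC. Qed.

Lemma comb00 : comb 0 0 = 0.
Proof. by rewrite /comb !scale0r addr0. Qed.

Lemma norm_exp_diff (x y : R) :
  `|expmi x - expmi y| ^+ 2 = 4 * (sin ((x - y)/2))%:C ^+ 2.
Proof.
rewrite -add_Re2_Im2 /=.
have -> : (4 : R[i]) = (4 : R)%:C by rewrite rmorphMn.
rewrite -rmorphXn -rmorphM; congr (_%:C).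
have h := cosB x y.
have hy : x - y = (x - y)/2 + (x - y)/2 by field.
have h2 : cos (x - y) = cos ((x-y)/2) ^+2 - sin ((x-y)/2) ^+ 2.
  by rewrite {1}hy cosD !expr2.
have := cos2Dsin2 x; have := cos2Dsin2 y; have := cos2Dsin2 ((x-y)/2).
nra.
Qed.
End Help.

Theorem proposition3 (R : realType) (E0 E1 : R) (e0 e1 : ket R)
  (c0 c1 : R[i]) (t : R) :
  E0 != E1 ->
  braket e0 e0 = 1 -> braket e1 e1 = 1 -> braket e0 e1 = 0 ->
  `|c0| ^+ 2 + `|c1| ^+ 2 = 1 ->
  let H := hamiltonian E0 E1 e0 e1 in
  let psi0 := c0 *: e0 + c1 *: e1 in
  let omega := E1 - E0 in
  let C_l1 := 2 * `|c0| * `|c1| in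
  spread_complexity H (evolution E0 E1 e0 e1 t) psi0
  = C_l1 ^+ 2 * (sin (omega * t / 2))%:C ^+ 2.
Proof.
move=> hE h00 h11 h01 hc H psi0 omega C_l1.
have hH y0 y1 : H *m comb e0 e1 y0 y1 = comb e0 e1 (E0%:C * y0) (E1%:C * y1).
  exact: mul_comb.
have hU y0 y1 : evolution E0 E1 e0 e1 t *m comb e0 e1 y0 y1
   = comb e0 e1 (expmi (E0 * t) * y0) (expmi (E1 * t) * y1).
  exact: mul_comb.
have hbc := braket_comb h00 h11 h01.
have hn : c0 * Num.conj c0 + c1 * Num.conj c1 = 1 by rewrite -!normCK.
have hpsi : psi0 = comb e0 e1 c0 c1 by [].
set a0 := Num.conj c0 * (E0%:C * c0) + Num.conj c1 * (E1%:C * c1).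
have hA1 : H *m psi0 - braket psi0 (H *m psi0) *: psi0 - 0 *: 0
    = comb e0 e1 (E0%:C * c0 - a0 * c0) (E1%:C * c1 - a0 * c1).
  by rewrite scaler0 subr0 hpsi hH hbc combZ combB.
rewrite /spread_complexity /krylov_basis (lanczos_step _ hA1).
set u0 := E0%:C * c0 - a0 * c0.
set u1 := E1%:C * c1 - a0 * c1.
have [hdeg|hnd] : (c0 == 0) || (c1 == 0) \/ (c0 != 0) && (c1 != 0).
  by case: (c0 == 0); case: (c1 == 0); auto.
  have [h0 h1] : u0 = 0 /\ u1 = 0.
    case/orP: hdeg => /eqP hz; rewrite /u0 /u1 /a0 hz rmorph0 /=;
      move: hn; rewrite hz rmorph0 /= => hn.
    - split; first ring.
      have -> : E1%:C * c1 - (0 * (E0%:C * 0) + c1^* * (E1%:C * c1)) * c1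
        = E1%:C * c1 * (1 - c1 * c1^*) by ring.
      by rewrite -hn; ring.
    - split; last ring.
      have -> : E0%:C * c0 - (c0^* * (E0%:C * c0) + 0 * (E1%:C * 0)) * c0
        = E0%:C * c0 * (1 - c0 * c0^*) by ring.
      by rewrite -hn; ring.
  rewrite h0 h1 comb00 knorm0 eqxx /= big_ord1 mul0r.
  rewrite /C_l1; case/orP: hdeg => /eqP ->; rewrite normr0; ring.
move/andP: hnd => [hc0 hc1].
have hc0' : Num.conj c0 != 0 by rewrite conjC_eq0.
have hc1' : Num.conj c1 != 0 by rewrite conjC_eq0.
have hd0 : Num.conj c0 = (1 - c1 * Num.conj c1) / c0.
  by rewrite -hn; field.
have hw : E1%:C - E0%:C != 0.
  rewrite subr_eq0; apply: contra hE => /eqP h.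
  by move/(congr1 (@complex.Re _)): h => /= ->.
have hm : 1 - c1 * Num.conj c1 != 0 by rewrite -hn addrK mulf_neq0.
set Q := braket (comb e0 e1 u0 u1) (comb e0 e1 u0 u1).
have hQ : Q = (E1%:C - E0%:C)^+2 * (c0 * Num.conj c0) * (c1 * Num.conj c1).
  rewrite /Q hbc /u0 /u1 /a0 !(rmorphM, rmorphD, rmorphB, rmorphN) /= !conjCK !conjR hd0.
  by field.
have hQ0 : Q != 0 by rewrite hQ !mulf_neq0 // expf_neq0.
have hQge : 0 <= Q.
  by rewrite /Q hbc ![Num.conj _ * _]mulrC -!normCK addr_ge0 // exprn_ge0.
set b1 := knorm (comb e0 e1 u0 u1).
have hb0 : b1 != 0 by rewrite /b1 /knorm sqrtC_eq0 -/Q.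
have hb2 : b1 ^+ 2 = Q by rewrite /b1 /knorm sqrtCK.
have hbr : Num.conj b1 = b1.
  by apply: conj_Creal; apply: ger0_real; rewrite /b1 /knorm sqrtC_ge0 -/Q.
rewrite (negbTE hb0).
set be := b1^-1.
have hber : Num.conj be = be by rewrite /be fmorphV /= hbr.
have hbe2 : be ^+ 2 = Q^-1 by rewrite /be exprVn hb2.
have hbQ : b1 = Q * be by rewrite /be -hb2; field.
have hA2 : H *m (be *: comb e0 e1 u0 u1) -
    braket (be *: comb e0 e1 u0 u1) (H *m (be *: comb e0 e1 u0 u1)) *:
    (be *: comb e0 e1 u0 u1) - b1 *: psi0 = 0.
  rewrite hbQ hpsi !combZ hH hbc ?combZ !combB -(comb00 e0 e1).
  rewrite !cM hber.
  congr (comb _ _ _ _).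
  - transitivity (be * (E0%:C * u0 - be^+2 * (Num.conj u0 * (E0%:C * u0)
        + Num.conj u1 * (E1%:C * u1)) * u0 - Q * c0)); first by ring.
    rewrite hbe2 hQ /u0 /u1 /a0 !(cM, cD, cN) !cK !conjR hd0.
    by field; repeat (apply/andP; split).
  - transitivity (be * (E1%:C * u1 - be^+2 * (Num.conj u0 * (E0%:C * u0)
        + Num.conj u1 * (E1%:C * u1)) * u1 - Q * c1)); first by ring.
    rewrite hbe2 hQ /u0 /u1 /a0 !(cM, cD, cN) !cK !conjR hd0.
    by field; repeat (apply/andP; split).
rewrite (lanczos_step _ hA2) knorm0 eqxx /= big_ord_recr big_ord1 /=.
rewrite mul0r add0r mul1r hpsi combZ hU hbc !cM hber.
set X := Num.conj u0 * (expmi (E0 * t) * c0) + Num.conj u1 * (expmi (E1 * t) * c1).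
rewrite (_ : _ + _ = be * X); last by rewrite /X; ring.
rewrite normrM exprMn normCK hber -expr2 hbe2.
have hX : X = (E1%:C - E0%:C) * (c0 * Num.conj c0) * (c1 * Num.conj c1)
    * (expmi (E1 * t) - expmi (E0 * t)).
  rewrite /X /u0 /u1 /a0 !(cM, cD, cN) !cK !conjR hd0.
  by field; repeat (apply/andP; split).
rewrite hX normrM exprMn norm_exp_diff [`|_ * _| ^+ 2]normCK !(cM, cD, cN) !cK !conjR.
have hs : (E1 * t - E0 * t) / 2 = (E1 - E0) * t / 2 by rewrite -mulrBl.
rewrite hQ /C_l1 /omega !exprMn !normCK hs.
by field; repeat (apply/andP; split).
Qed.
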